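(* Let $p$ be an odd prime and $A\subseteq \mathbb{F}_p$. Then \[ \left| T(A) - \left( \frac{|A|^6}{p} + 2 |A|^4 \right) \right| \leq p\, |A|^3. \]
   Context: $\mathbb{F}_p$ is the field with $p$ elements. A line means an affine line in $\mathbb{F}_p^2$. For a line $\ell$, $i(\ell)$ denotes the number of points of $A\times A$ lying on $\ell$, and $T(A)=\sum_{\text{all lines } \ell} i(\ell)^3$ is the number of collinear triples in $A\times A$. *)

(* Defs.v *)
From HB Require Import structures.
From mathcomp Require Import all_boot all_order all_algebra.
Set Implicit Arguments. Unset Strict Implicit. Unset Printing Implicit Defensive.
Import Order.TTheory GRing.Theory Num.Theory.
Local Open Scope ring_scope.

Definition line_through (F : finFieldType) (a v : F * F) : {set F * F} :=
  [set (a.1 + t * v.1, a.2 + t * v.2) | t : F].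

(* The set of all affine lines of F^2 (each line counted once, as a point set). *)
Definition lines (F : finFieldType) : {set {set F * F}} :=
  [set L : {set F * F} | [exists a : F * F, exists v : F * F,
      (v != (0, 0)) && (L == line_through a v)]].

Definition incid (F : finFieldType) (A : {set F}) (L : {set F * F}) : nat :=
  #|L :&: setX A A|.

Definition collinear_triples (F : finFieldType) (A : {set F}) : nat :=
  (\sum_(L in lines F) (incid A L) ^ 3)%N.

(* Main.v *)
Require Import Defs.
From HB Require Import structures.
From mathcomp Require Import all_boot all_order all_algebra.
From mathcomp Require Import ring lra.
Import Order.TTheory GRing.Theory Num.Theory.
Local Open Scope ring_scope.

Set Implicit Arguments. Unset Strict Implicit. Unset Printing Implicit Defensive.

Definition vln (F : finFieldType) (c : F) : {set F * F} := [set (c, y) | y : F].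
Definition gln (F : finFieldType) (m c : F) : {set F * F} := [set (x, m * x + c) | x : F].

Lemma mem_vln (F : finFieldType) (c x y : F) : ((x, y) \in vln c) = (x == c).
Proof.
apply/imsetP/eqP => [[y' _ [-> _]] //|->]; by exists y.
Qed.

Lemma mem_gln (F : finFieldType) (m c x y : F) : ((x, y) \in gln m c) = (y == m * x + c).
Proof.
apply/imsetP/eqP => [[x' _ [-> ->]] //|->]; by exists x.
Qed.

Lemma mem_line (F : finFieldType) (a v : F * F) x y :
  ((x, y) \in line_through a v) <-> exists t, x = a.1 + t * v.1 /\ y = a.2 + t * v.2.
Proof.
split => [/imsetP [t _ [-> ->]]|[t [-> ->]]]; first by exists t.
by apply/imsetP; exists t.
Qed.

Lemma in_lines (F : finFieldType) a (v : F * F) : v != (0, 0) -> line_through a v \in lines F.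
Proof.
move=> hv; rewrite inE; apply/existsP; exists a; apply/existsP; exists v; by rewrite hv eqxx.
Qed.

Lemma lines_eq (F : finFieldType) :
  lines F = [set vln c | c : F] :|: [set gln mc.1 mc.2 | mc : F * F].
Proof.
apply/setP => L; apply/idP/idP.
- rewrite inE => /existsP [a /existsP [[v1 v2] /andP [hv /eqP ->]]].
  apply/setUP; have [h1|h1] := eqVneq v1 0.
  + have h2 : v2 != 0 by move: hv; rewrite h1 xpair_eqE eqxx.
    left; apply/imsetP; exists a.1 => //; apply/setP => [[x y]].
    rewrite mem_vln; apply/idP/eqP.
    * by move/mem_line => [t [-> _]] /=; rewrite h1 mulr0 addr0.
    * move=> ->; apply/mem_line; exists ((y - a.2) / v2) => /=.
      rewrite h1 mulr0 addr0 divfK // addrC subrK; by [].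
  + right; apply/imsetP; exists (v2 / v1, a.2 - v2 / v1 * a.1) => //.
    apply/setP => [[x y]]; rewrite mem_gln /=; apply/idP/eqP.
    * move/mem_line => [t [-> ->]] /=; field; exact: h1.
    * move=> ->; apply/mem_line; exists ((x - a.1) / v1) => /=.
      split; first by rewrite divfK // addrC subrK.
      field; exact: h1.
- case/setUP => /imsetP [c _ ->].
  + have -> : vln c = line_through (c, 0) (0, 1).
      apply/setP => [[x y]]; rewrite mem_vln; apply/eqP/idP.
      * by move=> ->; apply/mem_line; exists y; rewrite /= mulr0 addr0 mulr1 add0r.
      * by move/mem_line => [t [-> _]] /=; rewrite mulr0 addr0.
    by apply: in_lines; rewrite xpair_eqE oner_eq0 andbF.
  + have -> : gln c.1 c.2 = line_through (0, c.2) (1, c.1).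
      apply/setP => [[x y]]; rewrite mem_gln; apply/eqP/idP.
      * by move=> ->; apply/mem_line; exists x; rewrite /= mulr1 add0r addrC mulrC.
      * by move/mem_line => [t [-> ->]] /=; rewrite mulr1 add0r addrC mulrC.
    by apply: in_lines; rewrite xpair_eqE oner_eq0.
Qed.

Definition gcnt (F : finFieldType) (A : {set F}) (mc : F * F) : nat :=
  (\sum_(x in A) ((mc.1 * x + mc.2)%R \in A))%N.

Lemma card_sep (T : finType) (A : {set T}) (P : pred T) :
  #|[set x in A | P x]| = (\sum_(x in A) P x)%N.
Proof.
rewrite -sum1_card big_mkcond [RHS]big_mkcond /=; apply: eq_bigr => x _.
by rewrite !inE; case: (x \in A); case: (P x).
Qed.

Lemma sum_ind (T : finType) (P : {set T}) : (\sum_(i : T) (i \in P))%N = #|P|.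
Proof.
rewrite -sum1_card [RHS]big_mkcond /=; apply: eq_bigr => i _.
by case: (i \in P).
Qed.

Lemma incid_v (F : finFieldType) (A : {set F}) c :
  incid A (vln c) = ((c \in A) * #|A|)%N.
Proof.
rewrite /incid; case: (boolP (c \in A)) => hc.
- have -> : vln c :&: setX A A = [set (c, y) | y in A].
    apply/setP => [[x y]]; rewrite !inE mem_vln /=; apply/idP/imsetP.
    + by case/andP => /eqP -> /andP [_ hy]; exists y.
    + by move=> [y' hy [-> ->]]; rewrite eqxx hc hy.
  by rewrite card_imset ?mul1n // => y1 y2 [].
- have -> : vln c :&: setX A A = set0.
    apply/setP => [[x y]]; rewrite !inE mem_vln /=.
    by apply/negP => /andP [/eqP -> /andP [hc' _]]; rewrite hc' in hc.
  by rewrite cards0.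
Qed.

Lemma incid_g (F : finFieldType) (A : {set F}) (mc : F * F) :
  incid A (gln mc.1 mc.2) = gcnt A mc.
Proof.
rewrite /incid /gcnt -card_sep.
have -> : gln mc.1 mc.2 :&: setX A A =
   [set (x, mc.1 * x + mc.2) | x in [set x in A | mc.1 * x + mc.2 \in A]].
  apply/setP => [[x y]]; rewrite !inE mem_gln /=; apply/idP/imsetP.
  + by case/andP => /eqP -> /andP [hx hy]; exists x; rewrite // inE hx hy.
  + by move=> [x' hx [-> ->]]; move: hx; rewrite !inE eqxx.
by rewrite card_imset // => x1 x2 [].
Qed.

Lemma T_split (F : finFieldType) (A : {set F}) :
  collinear_triples A = (#|A| * #|A| ^ 3 + \sum_(mc : F * F) gcnt A mc ^ 3)%N.
Proof.
rewrite /collinear_triples lines_eq.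
set V := [set vln _ | _ : F]; set G := [set gln _ _ | _ : F * F].
rewrite (eq_bigl [predU V & G]); last by move=> L; rewrite !inE.
rewrite bigU /=; last first.
  rewrite -setI_eq0; apply/eqP/setP => L; rewrite inE [in RHS]inE.
  apply/negP => /andP [/imsetP [c _ ->] /imsetP [[m d] _ /= /setP E]].
  have := E (c, 0); have := E (c, 1); rewrite !mem_vln !mem_gln eqxx /=.
  by move=> /esym/eqP <- /esym/eqP /eqP; rewrite eq_sym oner_eq0.
- rewrite big_imset /=; last first.
    move=> c1 c2 _ _ /setP /(_ (c1, 0)); rewrite !mem_vln eqxx.
    by move/esym/eqP.
  rewrite big_imset /=; last first.
    move=> [m1 c1] [m2 c2] _ _ /= /setP E.
    have := E (0, c1); rewrite !mem_gln !mulr0 !add0r eqxx => /esym/eqP e1.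
    have := E (1, m1 + c1); rewrite !mem_gln !mulr1 eqxx -e1 => /esym/eqP e2.
    by move: e2 => /addIr ->; rewrite e1.
  congr (_ + _)%N; last by apply: eq_bigr => mc _; rewrite incid_g.
  under eq_bigr do rewrite incid_v.
  transitivity (\sum_(i : F) (i \in A) * #|A| ^ 3)%N.
    by apply: eq_bigr => i _; case: (i \in A); rewrite ?mul1n ?mul0n ?exp0n.
  by rewrite -big_distrl /= sum_ind.
Qed.

Lemma gcnt_le (F : finFieldType) (A : {set F}) mc : (gcnt A mc <= #|A|)%N.
Proof.
rewrite /gcnt -sum1_card; apply: leq_sum => x _; exact: leq_b1.
Qed.

Lemma sum_one (F : finFieldType) (A : {set F}) (x : F) :
  (\sum_(mc : F * F) ((mc.1 * x + mc.2)%R \in A))%N = (#|F| * #|A|)%N.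
Proof.
have hinj : injective (fun mc : F * F => (mc.1, mc.2 - mc.1 * x)).
  move=> [m c] [m' c'] /= [-> /addIr ->] //.
rewrite (reindex_inj hinj) /=.
transitivity (\sum_(mc : F * F) (mc \in setX [set: F] A))%N.
  by apply: eq_bigr => [[m c]] _; rewrite /= addrC subrK !inE.
by rewrite sum_ind cardsX cardsT.
Qed.

Lemma sum_two (F : finFieldType) (A : {set F}) (x y : F) : x != y ->
  (\sum_(mc : F * F) (((mc.1 * x + mc.2)%R \in A) * ((mc.1 * y + mc.2)%R \in A)))%N
   = (#|A| * #|A|)%N.
Proof.
move=> hxy.
have finj : injective (fun mc : F * F => (mc.1 * x + mc.2, mc.1 * y + mc.2)).
  move=> [m c] [m' c'] /= [e1 e2].
  have H : (m - m') * (x - y) = (m * x + c) - (m' * x + c') - ((m * y + c) - (m' * y + c')).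
    by ring.
  rewrite e1 e2 !subrr ?subr0 in H.
  move/eqP: H; rewrite mulf_eq0 subr_eq0 (negbTE (_ : x - y != 0)) ?orbF; last first.
    by rewrite subr_eq0.
  move/eqP => em; rewrite em in e1 *; by move/addrI: e1 => ->.
transitivity (\sum_(mc : F * F) ((fun mc : F * F => ((mc.1 * x + mc.2)%R, (mc.1 * y + mc.2)%R)) mc
      \in setX A A))%N.
  by apply: eq_bigr => [[m c]] _; rewrite !inE mulnb.
by rewrite -cardsX -sum_ind [RHS](reindex_inj finj).
Qed.

Lemma sum_g1 (F : finFieldType) (A : {set F}) :
  (\sum_(mc : F * F) gcnt A mc)%N = (#|A| * (#|F| * #|A|))%N.
Proof.
rewrite /gcnt exchange_big /=.
under eq_bigr do rewrite sum_one.
by rewrite sum_nat_const.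
Qed.

Lemma sum_g2 (F : finFieldType) (A : {set F}) :
  (\sum_(mc : F * F) gcnt A mc ^ 2 + #|A| * #|A| ^ 2)%N
   = (#|A| * (#|F| * #|A| + #|A| * #|A| ^ 2))%N.
Proof.
rewrite /gcnt.
under eq_bigr do rewrite expnS expn1 big_distrlr /=.
rewrite exchange_big /=.
under eq_bigr do rewrite exchange_big /=.
rewrite -[in RHS]sum_nat_const -sum_nat_const -big_split /=.
apply: eq_bigr => x hx.
rewrite (bigD1 x hx) /= [in RHS](bigD1 x hx) /=.
under eq_bigr do rewrite mulnb andbb.
rewrite sum_one -addnA; congr (_ + _)%N.
rewrite addnC; congr (_ + _)%N.
apply: eq_bigr => y /andP [_ hyx]; rewrite sum_two ?expnS ?expn0 ?muln1 //.
by rewrite eq_sym.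
Qed.

Lemma sum_cubic (I : finType) (u : I -> rat) (a b c d : rat) :
  \sum_i (a * u i ^+ 3 + b * u i ^+ 2 + c * u i + d) =
  a * \sum_i u i ^+ 3 + b * \sum_i u i ^+ 2 + c * \sum_i u i + d * #|I|%:R.
Proof.
by rewrite !big_split /= -!mulr_sumr sumr_const mulr_natr.
Qed.

Lemma main_gen (F : finFieldType) (A : {set F}) :
  `| (collinear_triples A)%:R - ((#|A|%:R ^+ 6) / #|F|%:R + 2 * #|A|%:R ^+ 4) : rat |
    <= #|F|%:R * #|A|%:R ^+ 3.
Proof.
set q : rat := #|F|%:R; set N : rat := #|A|%:R.
set u := fun mc : F * F => (gcnt A mc)%:R : rat.
have hT : (collinear_triples A)%:R = N ^+ 4 + \sum_mc u mc ^+ 3 :> rat.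
  rewrite T_split natrD natrM !natrX natr_sum /N -exprS.
  by congr (_ + _); apply: eq_bigr => mc _; rewrite natrX.
have h1 : \sum_mc u mc = N * (q * N).
  by rewrite -natr_sum sum_g1 !natrM.
have h2 : \sum_mc u mc ^+ 2 + N * N ^+ 2 = N * (q * N + N * N ^+ 2).
  have H := congr1 (fun n : nat => n%:R : rat) (sum_g2 A).
  rewrite /= !(natrD, natrM, natrX) natr_sum in H; rewrite /N /q -H.
  by congr (_ + _); apply: eq_bigr => mc _; rewrite natrX.
have hcard : #|{: F * F}|%:R = q ^+ 2 :> rat by rewrite card_prod natrM expr2.
have hq : 0 < q by rewrite ltr0n; apply/card_gt0P; exists 0.
have hNq : N <= q by rewrite ler_nat; apply: max_card.
have hN0 : 0 <= N by rewrite ler0n.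
have hu0 : forall mc, 0 <= u mc by move=> mc; rewrite ler0n.
have huN : forall mc, u mc <= N by move=> mc; rewrite ler_nat gcnt_le.
have lo : 0 <= \sum_mc (q ^+ 2 * u mc ^+ 3 + (- 2 * q * N ^+ 2) * u mc ^+ 2
                     + N ^+ 4 * u mc + 0).
  apply: sumr_ge0 => mc _.
  have -> : q ^+ 2 * u mc ^+ 3 + (- 2 * q * N ^+ 2) * u mc ^+ 2 + N ^+ 4 * u mc + 0
     = (q * u mc - N ^+ 2) ^+ 2 * u mc by ring.
  by apply: mulr_ge0; [exact: sqr_ge0 | exact: hu0].
have up : \sum_mc (q ^+ 2 * u mc ^+ 3 + (- 2 * q * N ^+ 2 - N * q ^+ 2) * u mc ^+ 2
                     + (N ^+ 4 + 2 * q * N ^+ 3) * u mc + (- N ^+ 5)) <= 0.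
  apply: sumr_le0 => mc _.
  have -> : q ^+ 2 * u mc ^+ 3 + (- 2 * q * N ^+ 2 - N * q ^+ 2) * u mc ^+ 2
        + (N ^+ 4 + 2 * q * N ^+ 3) * u mc + (- N ^+ 5)
     = (q * u mc - N ^+ 2) ^+ 2 * (u mc - N) by ring.
  apply: mulr_ge0_le0; first exact: sqr_ge0.
  by rewrite subr_le0.
rewrite !sum_cubic hcard in lo up.
rewrite hT.
set S3 := \sum_mc u mc ^+ 3 in lo up *.
set S2 := \sum_mc u mc ^+ 2 in h2 lo up.
set S1 := \sum_mc u mc in h1 lo up.
have eS2 : S2 = N * (q * N + N * N ^+ 2) - N * N ^+ 2 by rewrite -h2 addrK.
rewrite eS2 h1 in lo up.
have hq2 : 0 < q ^+ 2 by rewrite exprn_gt0.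
have key : N ^+ 4 + S3 - (N ^+ 6 / q + 2 * N ^+ 4)
   = (q ^+ 2 * S3 - q ^+ 2 * N ^+ 4 - q * N ^+ 6) / q ^+ 2.
  by field; rewrite lt0r_neq0.
rewrite key normf_div (gtr0_norm hq2) ler_pdivrMr // ler_norml.
have f1 : 0 <= q * N ^+ 3 * (q - N) * (q + 2 * N).
  apply: mulr_ge0; last by apply: addr_ge0; [exact: ltW|apply: mulr_ge0].
  apply: mulr_ge0; last by rewrite subr_ge0.
  by apply: mulr_ge0; [exact: ltW|apply: exprn_ge0].
have f2 : 0 <= q * N ^+ 5 by apply: mulr_ge0; [exact: ltW|apply: exprn_ge0].
apply/andP; split; nra.
Qed.

Unset Implicit Arguments. Set Strict Implicit. Set Printing Implicit Defensive.

Theorem mainTheorem3 (p : nat) (hp : prime p) (hodd : odd p) (A : {set 'F_p}) :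
  `| (collinear_triples A)%:R - ((#|A|%:R ^+ 6) / p%:R + 2 * #|A|%:R ^+ 4) : rat |
    <= p%:R * #|A|%:R ^+ 3.
Proof.
have := main_gen A.
by rewrite card_Fp.
Qed.
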